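(* Let $\mathcal G=(I,O,\lambda)$ be a synchronous game and let $t\in\{loc,q,qa,qc,vect\}$. Then $p(a,b|v,w)$ is a perfect t-strategy for $\mathcal G$ if and only if $p(a,b|v,w)$ is a perfect t-strategy for $\mathcal G_s$.
   Context: A synchronous game $\mathcal G=(I,O,\lambda)$ consists of finite sets $I,O$ and $\lambda:I\times I\times O\times O\to\{0,1\}$ with $\lambda(v,v,a,b)=1$ if $a=b$ and $0$ if $a\ne b$. $\mathcal G_s=(I,O,\lambda_s)$ where $\lambda_s(v,w,a,b)=\lambda(v,w,a,b)\lambda(w,v,b,a)$. A strategy is a conditional probability density $p(a,b|v,w)$; it is perfect for a game with rule $\lambda$ if $\lambda(v,w,a,b)=0\Rightarrow p(a,b|v,w)=0$. The classes: loc = densities $p(a,b|v,w)=P(f_v=a,g_w=b)$ for random variables $f_v,g_w$ on a common probability space; q = densities $\langle(E_{v,a}\otimes F_{w,b})\psi,\psi\rangle$ with finite-dimensional Hilbert spaces, a unit vector $\psi$, and projection-valued measures $\{E_{v,a}\}_a$, $\{F_{w,b}\}_b$ (orthogonal projections summing to $I$); qa = closure of the set of q-densities; qc = densities $\langle E_{v,a}F_{w,b}\psi,\psi\rangle$ on a single Hilbert space with projection-valued measures satisfying $E_{v,a}F_{w,b}=F_{w,b}E_{v,a}$; vect = densities $\langle h_{v,a},k_{w,b}\rangle$ where for each $v$ the $h_{v,a}$ ($a\in O$) are mutually orthogonal, likewise the $k_{v,b}$, there is a unit vector $\eta$ with $\sum_ah_{v,a}=\eta=\sum_bk_{w,b}$,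 and all $\langle h_{v,a},k_{w,b}\rangle\ge0$. *)

(* Defs.v *)
From HB Require Import structures.
From mathcomp Require Import all_boot all_order all_algebra.
From mathcomp Require Import all_classical all_reals all_analysis.
From mathcomp Require Import complex mxtens.

Set Implicit Arguments.
Unset Strict Implicit.
Unset Printing Implicit Defensive.

Import Order.TTheory GRing.Theory Num.Theory.
Local Open Scope ring_scope.
Local Open Scope classical_set_scope.

Definition rule (I O : finType) := I -> I -> O -> O -> bool.

Definition synchronous (I O : finType) (lam : rule I O) : Prop :=
  forall (v : I) (a b : O), lam v v a b = (a == b).

Definition sym_rule (I O : finType) (lam : rule I O) : rule I O :=
  fun v w a b => lam v w a b && lam w v b a.

Section Strategies.
Variable R : realType.
Variables I O : finType.

Definition density := I -> I -> O -> O -> R.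

Definition cond_density (p : density) : Prop :=
  (forall v w a b, 0 <= p v w a b) /\
  (forall v w, \sum_(a : O) \sum_(b : O) p v w a b = 1).

Definition perfect_for (lam : rule I O) (p : density) : Prop :=
  forall v w a b, lam v w a b = false -> p v w a b = 0.

Definition loc_density (p : density) : Prop :=
  exists (d : measure_display) (Omega : measurableType d)
         (P : probability Omega R) (f g : I -> Omega -> O),
    (forall v a, measurable [set om | f v om = a]) /\
    (forall w b, measurable [set om | g w om = b]) /\
    (forall v w a b,
        (p v w a b)%:E = P [set om | f v om = a /\ g w om = b]).

Local Notation C := R[i].

(* Finite-dimensional case: Hilbert space C^n, operators are n x n complex
   matrices; adjoint = conjugate transpose. *)
Definition adjmx (m n : nat) (A : 'M[C]_(m, n)) : 'M[C]_(n, m) :=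
  map_mx (fun z => z^*) A^T.

Definition is_projmx (n : nat) (E : 'M[C]_n) : Prop :=
  E *m E = E /\ adjmx E = E.

Definition is_PVMmx (n : nat) (E : O -> 'M[C]_n) : Prop :=
  (forall a, is_projmx (E a)) /\ \sum_(a : O) E a = 1%:M.

(* q: p(a,b|v,w) = < (E_{v,a} (x) F_{w,b}) psi, psi > on C^n (x) C^m. *)
Definition q_density (p : density) : Prop :=
  exists (n m : nat) (E : I -> O -> 'M[C]_n) (F : I -> O -> 'M[C]_m)
         (psi : 'cV[C]_(n * m)),
    (forall v, is_PVMmx (E v)) /\ (forall w, is_PVMmx (F w)) /\
    (adjmx psi *m psi) 0 0 = 1 /\
    (forall v w a b,
       ((p v w a b)%:C)%C = (adjmx psi *m ((E v a *t F w b) *m psi)) 0 0).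

Definition qa_density (p : density) : Prop :=
  forall eps : R, 0 < eps ->
    exists p' : density, q_density p' /\
      forall v w a b, `|p v w a b - p' v w a b| < eps.

End Strategies.

Record hilbert (R : realType) := Hilbert {
  hspace :> lmodType R[i];
  hip : hspace -> hspace -> R[i];
  hip_linear : forall (c : R[i]) (x y z : hspace),
      hip (c *: x + y) z = c * hip x z + hip y z;
  hip_conj : forall x y : hspace, hip y x = (hip x y)^*;
  hip_ge0 : forall x : hspace, 0 <= hip x x;
  hip_def : forall x : hspace, hip x x = 0 -> x = 0;
  hip_complete : forall u : nat -> hspace,
      (forall eps : R, 0 < eps -> exists N : nat, forall m n : nat,
          (N <= m)%N -> (N <= n)%N -> complex.Re (hip (u m - u n) (u m - u n)) < eps) ->
      exists x : hspace, forall eps : R, 0 < eps -> exists N : nat,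
          forall n : nat, (N <= n)%N -> complex.Re (hip (u n - x) (u n - x)) < eps
}.

Section Commuting.
Variable R : realType.
Variables I O : finType.

Definition is_proj (H : hilbert R) (E : H -> H) : Prop :=
  linear E /\ (forall x, E (E x) = E x) /\
  (forall x y, hip (E x) y = hip x (E y)).

Definition is_PVM (H : hilbert R) (E : O -> H -> H) : Prop :=
  (forall a, is_proj (E a)) /\ (forall x, \sum_(a : O) E a x = x).

Definition qc_density (p : density R I O) : Prop :=
  exists (H : hilbert R) (E F : I -> O -> H -> H) (psi : H),
    (forall v, is_PVM (E v)) /\ (forall w, is_PVM (F w)) /\
    (forall v w a b x, E v a (F w b x) = F w b (E v a x)) /\
    hip psi psi = 1 /\
    (forall v w a b, ((p v w a b)%:C)%C = hip (E v a (F w b psi)) psi).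

Definition vect_density (p : density R I O) : Prop :=
  exists (H : hilbert R) (h k : I -> O -> H) (eta : H),
    (forall v a a', a != a' -> hip (h v a) (h v a') = 0) /\
    (forall w b b', b != b' -> hip (k w b) (k w b') = 0) /\
    hip eta eta = 1 /\
    (forall v, \sum_(a : O) h v a = eta) /\
    (forall w, \sum_(b : O) k w b = eta) /\
    (forall v w a b, 0 <= hip (h v a) (k w b)) /\
    (forall v w a b, ((p v w a b)%:C)%C = hip (h v a) (k w b)).

End Commuting.

Inductive corr_class := Loc | Q | QA | QC | Vect.

Definition in_class (R : realType) (I O : finType) (t : corr_class)
  (p : density R I O) : Prop :=
  match t with
  | Loc => loc_density p
  | Q => q_density p
  | QA => qa_density p
  | QC => qc_density p
  | Vect => vect_density p
  end.

Definition perfect_strategy (R : realType) (I O : finType) (t : corr_class)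
  (lam : rule I O) (p : density R I O) : Prop :=
  cond_density p /\ in_class t p /\ perfect_for lam p.

(* Main.v *)
Require Import Defs.
From mathcomp Require Import all_boot all_algebra all_reals.
From HB Require Import structures.
From mathcomp Require Import all_boot all_order all_algebra.
From mathcomp Require Import all_classical all_reals all_analysis.
From mathcomp Require Import complex mxtens ring lra.

Set Implicit Arguments.
Unset Strict Implicit.
Unset Printing Implicit Defensive.
Import Order.TTheory GRing.Theory Num.Theory.
Local Open Scope ring_scope.


Section Abstract.
Variables (R : realType) (I O : finType) (V : zmodType).
Variables (r : V -> V -> R) (sc : R -> V -> V).
Hypothesis rD : forall x y z, r (x + y) z = r x z + r y z.
Hypothesis rS : forall x y, r x y = r y x.
Hypothesis r_ge0 : forall x, 0 <= r x x.
Hypothesis rZ : forall t x y, r (sc t x) y = t * r x y.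

Lemma r0 z : r 0 z = 0.
Proof. have := rD 0 0 z; rewrite addr0; lra. Qed.

Lemma rN x z : r (- x) z = - r x z.
Proof. have := rD x (- x) z; rewrite subrr r0; lra. Qed.

Lemma rB x y z : r (x - y) z = r x z - r y z.
Proof. by rewrite rD rN. Qed.

Lemma rDr x y z : r z (x + y) = r z x + r z y.
Proof. by rewrite rS rD !(rS _ z). Qed.

Lemma rBr x y z : r z (x - y) = r z x - r z y.
Proof. by rewrite rS rB !(rS _ z). Qed.

Lemma r_suml (J : finType) (F : J -> V) z :
  r (\sum_j F j) z = \sum_j r (F j) z.
Proof.
apply: (big_morph (fun x => r x z)); first by move=> x y; rewrite rD.
exact: r0.
Qed.

Lemma r_sumr (J : finType) (F : J -> V) z :
  r z (\sum_j F j) = \sum_j r z (F j).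
Proof. by rewrite rS r_suml; apply: eq_bigr => j _; rewrite rS. Qed.

Lemma key_ineq d y t : 0 < t -> 2 * t * `|r d y| <= t ^+ 2 * r d d + r y y.
Proof.
move=> t0.
have H1 := r_ge0 (sc t d - y).
have H2 := r_ge0 (sc t d + y).
rewrite rB rBr rBr rZ rZ (rS y (sc t d)) rZ in H1.
rewrite rD rDr rDr rZ rZ (rS y (sc t d)) rZ in H2.
rewrite (rS d (sc t d)) rZ in H1 H2.

case: (ler0P (r d y)) => Hs.
- rewrite expr2; nra.
- rewrite expr2; nra.
Qed.

Definition Xq (q : density R I O) v a :=
  \sum_b q v v a b + \sum_b q v v b a - 2 * q v v a a.

Variables (q : density R I O) (h k : I -> O -> V) (eta : V).
Hypothesis Hq : forall v w a b, q v w a b = r (h v a) (k w b).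
Hypothesis Hh : forall v, \sum_a h v a = eta.
Hypothesis Hk : forall w, \sum_b k w b = eta.
Hypothesis Hhe : forall v a, r (h v a) eta = r (h v a) (h v a).
Hypothesis Hke : forall w b, r eta (k w b) = r (k w b) (k w b).
Hypothesis Hee : r eta eta = 1.

Lemma rkk_le1 w b : r (k w b) (k w b) <= 1.
Proof.
have : \sum_b' r (k w b') (k w b') = 1.
  rewrite -Hee -{2}(Hk w) r_sumr; apply: eq_bigr => b' _; by rewrite Hke.
rewrite (bigD1 b) //= => <-; rewrite lerDl; apply: sumr_ge0 => *; exact: r_ge0.
Qed.

Lemma rdd v a : r (h v a - k v a) (h v a - k v a) = Xq q v a.
Proof.
rewrite rB !rBr -Hhe -Hke (rS (k v a) (h v a)) /Xq -Hq.
have E1 : r (h v a) eta = \sum_b q v v a b.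
  by rewrite -(Hk v) r_sumr; apply: eq_bigr => b _; rewrite Hq.
have E2 : r eta (k v a) = \sum_b q v v b a.
  by rewrite -(Hh v) r_suml; apply: eq_bigr => b _; rewrite Hq.
rewrite E1 E2; lra.
Qed.

Lemma abstract_bound v w a b t : 0 < t ->
  2 * t * `|q v w a b - q w v b a| <= t ^+ 2 * (Xq q v a + Xq q w b) + 2.
Proof.
move=> t0.
have -> : q v w a b - q w v b a =
   r (h v a - k v a) (k w b) - r (h w b - k w b) (k v a).
  rewrite !Hq !rB (rS (k w b) (k v a)); lra.
have B1 := key_ineq (h v a - k v a) (k w b) t0.
have B2 := key_ineq (h w b - k w b) (k v a) t0.
rewrite rdd in B1; rewrite rdd in B2.
have K1 := rkk_le1 w b; have K2 := rkk_le1 v a.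
set x1 := r (h v a - k v a) (k w b) in B1 *.
set x2 := r (h w b - k w b) (k v a) in B2 *.
have N : `|x1 - x2| <= `|x1| + `|x2| by apply: ler_normB.
have T : 0 <= 2 * t by lra.
have := ler_wpM2l T N.
lra.
Qed.

End Abstract.


Section Bounds.
Variables (R : realType) (I O : finType).

Definition Bnd (q : density R I O) := forall v w a b t, 0 < t ->
  2 * t * `|q v w a b - q w v b a| <= t ^+ 2 * (Xq q v a + Xq q w b) + 2.

Definition diag0 (q : density R I O) := forall v a b, a != b -> q v v a b = 0.

Lemma Xq0 q : diag0 q -> forall v a, Xq q v a = 0.
Proof.
move=> D v a; rewrite /Xq (bigD1 a) //= big1 ?addr0; last first.
  by move=> b Hb; apply: D; rewrite eq_sym.
rewrite (bigD1 a) //= big1 ?addr0; last by move=> b Hb; apply: D.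
lra.
Qed.

Lemma small_zero (x : R) : (forall t, 0 < t -> 2 * t * `|x| <= 2) -> x = 0.
Proof.
move=> H; apply/eqP; rewrite -normr_eq0; apply/negPn/negP => Hne.
have dp : 0 < `|x| by rewrite normr_gt0 -normr_eq0.
have t0 : 0 < 2 / `|x| by apply: divr_gt0 => //; lra.
have := H (2 / `|x|) t0.
have -> : 2 * (2 / `|x|) * `|x| = 4.
  by rewrite -!mulrA mulVf ?mulr1 //; lra.
lra.
Qed.

Lemma sym_of_bound q : Bnd q -> diag0 q -> forall v w a b, q v w a b = q w v b a.
Proof.
move=> B D v w a b; apply/eqP; rewrite -subr_eq0; apply/eqP; apply: small_zero.
move=> t t0; have := B v w a b t t0; rewrite !Xq0 //; lra.
Qed.

Lemma Xq_close (q1 q2 : density R I O) eps :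
  (forall v w a b, `|q1 v w a b - q2 v w a b| <= eps) ->
  forall v a, `|Xq q1 v a - Xq q2 v a| <= (#|O|%:R * 2 + 2) * eps.
Proof.
move=> H v a.
have -> : Xq q1 v a - Xq q2 v a =
   \sum_b (q1 v v a b - q2 v v a b) + \sum_b (q1 v v b a - q2 v v b a)
   - 2 * (q1 v v a a - q2 v v a a).
  rewrite /Xq !sumrB; lra.
have S1 : `|\sum_b (q1 v v a b - q2 v v a b)| <= #|O|%:R * eps.
  apply: le_trans; first exact: ler_norm_sum.
  apply: le_trans; first by apply: ler_sum => b _; exact: H.
  by rewrite sumr_const mulr_natl.
have S2 : `|\sum_b (q1 v v b a - q2 v v b a)| <= #|O|%:R * eps.
  apply: le_trans; first exact: ler_norm_sum.
  apply: le_trans; first by apply: ler_sum => b _; exact: H.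
  by rewrite sumr_const mulr_natl.
have S3 := H v v a a.
set A := \sum_b _ in S1 *; set B := \sum_b _ in S2 *.
have T1 : `|A + B - 2 * (q1 v v a a - q2 v v a a)| <= `|A| + `|B| + 2 * `|q1 v v a a - q2 v v a a|.
  apply: le_trans (ler_normB _ _) _; rewrite normrM ger0_norm //.
  by rewrite lerD2r ler_normD.
lra.
Qed.

Lemma qa_sym (p : density R I O) :
  (forall eps, 0 < eps -> exists p', Bnd p' /\ forall v w a b, `|p v w a b - p' v w a b| < eps) ->
  diag0 p -> forall v w a b, p v w a b = p w v b a.
Proof.
move=> Happ D v w a b; apply/eqP; rewrite -subr_eq0; apply/eqP; apply: small_zero.
move=> t t0; apply/ler_addgt0Pr => e e0.
pose c : R := #|O|%:R * 2 + 2.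
have c0 : 0 <= c by rewrite /c; apply: addr_ge0 => //; apply: mulr_ge0.
pose K : R := t ^+ 2 * (2 * c) + 4 * t.
have K0 : 0 <= K by rewrite /K; apply: addr_ge0; [apply: mulr_ge0; [apply: exprn_ge0|]|]; lra.
pose eps : R := e / (K + 1).
have eps0 : 0 < eps by apply: divr_gt0 => //; lra.
have epsK : eps * (K + 1) = e by rewrite /eps mulrVK // unitfE; apply/eqP; lra.
have [p' [Bp' Hc]] := Happ eps eps0.
have Hc' : forall v w a b, `|p' v w a b - p v w a b| <= eps.
  by move=> *; rewrite distrC ltW.
have X1 := Xq_close Hc' v a; have X2 := Xq_close Hc' w b.
rewrite (Xq0 D) subr0 in X1; rewrite (Xq0 D) subr0 in X2.
have HB := Bp' v w a b t t0.
have Hd : `|p v w a b - p w v b a| <= `|p' v w a b - p' w v b a| + 2 * eps.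
  have -> : p v w a b - p w v b a = (p' v w a b - p' w v b a)
      + ((p v w a b - p' v w a b) - (p w v b a - p' w v b a)) by ring.
  apply: le_trans (ler_normD _ _) _; rewrite lerD2l.
  apply: le_trans (ler_normB _ _) _.
  apply: le_trans (lerD (ltW (Hc v w a b)) (ltW (Hc w v b a))) _; lra.
have XX : Xq p' v a + Xq p' w b <= 2 * c * eps.
  rewrite /c; have := ler_norm (Xq p' v a); have := ler_norm (Xq p' w b); lra.
have t2 : 0 <= t ^+ 2 by apply: exprn_ge0; lra.
have M1 := ler_wpM2l t2 XX.
have M2 : 2 * t * `|p v w a b - p w v b a| <= 2 * t * (`|p' v w a b - p' w v b a| + 2 * eps).
  by apply: ler_wpM2l => //; lra.
have : eps * K <= e by rewrite -epsK ler_pM2l // lerDl.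
rewrite /K; nra.
Qed.

End Bounds.


Section ReFacts.
Variable R : realType.
Implicit Types x y z : R[i].

Lemma ReD x y : complex.Re (x + y) = complex.Re x + complex.Re y.
Proof. by case: x => a b; case: y => c d. Qed.

Lemma ReRM (t : R) z : complex.Re ((t%:C)%C * z) = t * complex.Re z.
Proof. by case: z => a b /=; rewrite mul0r subr0. Qed.

Lemma ReJ z : complex.Re (z^*) = complex.Re z.
Proof. by case: z. Qed.

Lemma Re_ge0 z : 0 <= z -> 0 <= complex.Re z.
Proof. by rewrite lecE => /andP[_ ]. Qed.

Lemma ReR (t : R) : complex.Re ((t%:C)%C) = t.
Proof. by []. Qed.

Lemma Re1 : complex.Re (1 : R[i]) = 1.
Proof. by []. Qed.

Lemma Re0 : complex.Re (0 : R[i]) = 0.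
Proof. by []. Qed.
End ReFacts.

Section HilbertInst.
Variables (R : realType) (I O : finType) (H : hilbert R).

Definition hr (x y : H) : R := complex.Re (hip x y).
Definition hsc (t : R) (x : H) : H := ((t%:C)%C *: x).

Lemma hip0 (z : H) : hip 0 z = 0.
Proof.
have := hip_linear 1 0 0 z; rewrite scaler0 addr0 mul1r => E.
by have := congr1 (fun u => u - hip 0 z) E; rewrite subrr addrK => <-.
Qed.

Lemma hrD x y z : hr (x + y) z = hr x z + hr y z.
Proof. by rewrite /hr -[x]scale1r hip_linear mul1r ReD scale1r. Qed.

Lemma hrS x y : hr x y = hr y x.
Proof. by rewrite /hr hip_conj ReJ. Qed.

Lemma hr_ge0 x : 0 <= hr x x.
Proof. exact/Re_ge0/hip_ge0. Qed.

Lemma hrZ t x y : hr (hsc t x) y = t * hr x y.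
Proof. by rewrite /hr /hsc -[_ *: x]addr0 hip_linear hip0 addr0 ReRM. Qed.

End HilbertInst.

Section VectQC.
Variables (R : realType) (I O : finType).

Lemma vect_bound (p : density R I O) : vect_density p -> Bnd p.
Proof.
move=> [H [h [k [eta [Oh [Ok [Hee [Hh [Hk [_ Hp]]]]]]]]]].
move=> v w a b t t0.
apply: (@abstract_bound R I O H (@hr R H) (@hsc R H) _ _ _ _ p h k eta).
- exact: hrD.
- exact: hrS.
- exact: hr_ge0.
- exact: hrZ.
- by move=> v' w' a' b'; rewrite /hr -Hp.
- exact: Hh.
- exact: Hk.
- move=> v' a'; rewrite -{1}(Hh v') (r_sumr (@hrD R H) (@hrS R H)).
  rewrite (bigD1 a') //= big1 ?addr0 // => a'' Ha''.
  by rewrite /hr Oh ?Re0 // eq_sym.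
- move=> w' b'; rewrite -{1}(Hk w') (r_suml (@hrD R H)).
  rewrite (bigD1 b') //= big1 ?addr0 // => b'' Hb''.
  by rewrite /hr Ok ?Re0.
- by rewrite /hr Hee.
- exact: t0.
Qed.

Lemma qc_bound (p : density R I O) : qc_density p -> Bnd p.
Proof.
move=> [H [E [F [psi [HE [HF [Hcom [Hpsi Hp]]]]]]]].
have Esa : forall v a x y, hip (E v a x) y = hip x (E v a y).
  by move=> v a x y; have [/(_ a) [_ [_ ->]] _] := HE v.
have Fsa : forall w b x y, hip (F w b x) y = hip x (F w b y).
  by move=> w b x y; have [/(_ b) [_ [_ ->]] _] := HF w.
have Eid : forall v a x, E v a (E v a x) = E v a x.
  by move=> v a x; have [/(_ a) [_ [-> _]] _] := HE v.
have Fid : forall w b x, F w b (F w b x) = F w b x.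
  by move=> w b x; have [/(_ b) [_ [-> _]] _] := HF w.
move=> v w a b t t0.
apply: (@abstract_bound R I O H (@hr R H) (@hsc R H) _ _ _ _ p
         (fun v a => E v a psi) (fun w b => F w b psi) psi).
- exact: hrD.
- exact: hrS.
- exact: hr_ge0.
- exact: hrZ.
- by move=> v' w' a' b'; rewrite /hr -Fsa -Hcom -Hp.
- by move=> v'; have [_ ->] := HE v'.
- by move=> w'; have [_ ->] := HF w'.
- by move=> v' a'; rewrite /hr -{1}Eid Esa.
- by move=> w' b'; rewrite /hr -{1}Fid -Fsa.
- by rewrite /hr Hpsi.
- exact: t0.
Qed.

End VectQC.


Section MxFacts.
Variable R : realType.
Local Notation C := R[i].

Lemma adjmxE m n (A : 'M[C]_(m, n)) i j : adjmx A i j = (A j i)^*.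
Proof. by rewrite /adjmx !mxE. Qed.

Lemma adjmxM m n p (A : 'M[C]_(m, n)) (B : 'M[C]_(n, p)) :
  adjmx (A *m B) = adjmx B *m adjmx A.
Proof. by rewrite /adjmx trmx_mul map_mxM. Qed.

Lemma adjmxK m n (A : 'M[C]_(m, n)) : adjmx (adjmx A) = A.
Proof. by apply/matrixP => i j; rewrite !adjmxE conjCK. Qed.

Lemma adjmx_tens m n p q (A : 'M[C]_(m, n)) (B : 'M[C]_(p, q)) :
  adjmx (A *t B) = adjmx A *t adjmx B.
Proof. by rewrite /adjmx trmx_tens map_mxT. Qed.

Lemma adjmx1 n : adjmx (1%:M : 'M[C]_n) = 1%:M.
Proof. by apply/matrixP => i j; rewrite adjmxE !mxE eq_sym; case: (_ == _); rewrite ?conjC1 ?conjC0. Qed.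

Lemma tens11 n m : (1%:M : 'M[C]_n) *t (1%:M : 'M[C]_m) = 1%:M.
Proof.
apply/matrixP => i j.
case: (mxtens_indexP i) => i1 i2; case: (mxtens_indexP j) => j1 j2.
rewrite tensmxE !mxE (inj_eq (can_inj (@mxtens_indexK _ _))) xpair_eqE.
by case: (i1 == j1); case: (i2 == j2); rewrite ?mulr1 ?mulr0 ?mul0r.
Qed.

Lemma tens_suml (J : finType) n m p q (A : J -> 'M[C]_(n, m)) (B : 'M[C]_(p, q)) :
  \sum_j (A j *t B) = (\sum_j A j) *t B.
Proof.
apply/matrixP => i k.
case: (mxtens_indexP i) => i1 i2; case: (mxtens_indexP k) => k1 k2.
rewrite summxE tensmxE summxE mulr_suml; apply: eq_bigr => j _.
by rewrite tensmxE.
Qed.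

Lemma tens_sumr (J : finType) n m p q (A : 'M[C]_(n, m)) (B : J -> 'M[C]_(p, q)) :
  \sum_j (A *t B j) = A *t (\sum_j B j).
Proof.
apply/matrixP => i k.
case: (mxtens_indexP i) => i1 i2; case: (mxtens_indexP k) => k1 k2.
rewrite summxE tensmxE summxE mulr_sumr; apply: eq_bigr => j _.
by rewrite tensmxE.
Qed.

Variable N : nat.
Definition mr (x y : 'cV[C]_N) : R := complex.Re ((adjmx y *m x) 0 0).
Definition msc (t : R) (x : 'cV[C]_N) : 'cV[C]_N := (t%:C)%C *: x.

Lemma mrD x y z : mr (x + y) z = mr x z + mr y z.
Proof. by rewrite /mr mulmxDr mxE ReD. Qed.

Lemma ip_conj (x y : 'cV[C]_N) : (adjmx y *m x) 0 0 = ((adjmx x *m y) 0 0)^*.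
Proof. by rewrite -adjmxE adjmxM adjmxK. Qed.

Lemma mrS x y : mr x y = mr y x.
Proof. by rewrite /mr ip_conj ReJ. Qed.

Lemma mr_ge0 x : 0 <= mr x x.
Proof.
apply: Re_ge0; rewrite mxE; apply: sumr_ge0 => i _.
by rewrite adjmxE mulrC mul_conjC_ge0.
Qed.

Lemma mrZ t x y : mr (msc t x) y = t * mr x y.
Proof. by rewrite /mr /msc -scalemxAr mxE ReRM. Qed.

End MxFacts.

Section QInst.
Variables (R : realType) (I O : finType).

Lemma q_bound (p : density R I O) : q_density p -> Bnd p.
Proof.
move=> [n [m [E [F [psi [HE [HF [Hpsi Hp]]]]]]]].
have Esa : forall v a, adjmx (E v a) = E v a by move=> v a; have [/(_ a) [_ ->] _] := HE v.
have Fsa : forall w b, adjmx (F w b) = F w b by move=> w b; have [/(_ b) [_ ->] _] := HF w.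
have Eid : forall v a, E v a *m E v a = E v a by move=> v a; have [/(_ a) [-> _] _] := HE v.
have Fid : forall w b, F w b *m F w b = F w b by move=> w b; have [/(_ b) [-> _] _] := HF w.
pose h v a := (E v a *t (1%:M : 'M[R[i]]_m)) *m psi.
pose k w b := ((1%:M : 'M[R[i]]_n) *t F w b) *m psi.
move=> v w a b t t0.
apply: (@abstract_bound R I O _ (@mr R (n * m)) (@msc R (n * m)) _ _ _ _ p h k psi).
- exact: mrD.
- exact: mrS.
- exact: mr_ge0.
- exact: mrZ.
- move=> v' w' a' b'; rewrite /mr /h /k adjmxM adjmx_tens adjmx1 Fsa.
  by rewrite -!mulmxA [X in _ *m X]mulmxA tensmx_mul mul1mx mulmx1 -Hp.
- move=> v'; rewrite /h -mulmx_suml tens_suml.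
  by have [_ ->] := HE v'; rewrite tens11 mul1mx.
- move=> w'; rewrite /k -mulmx_suml tens_sumr.
  by have [_ ->] := HF w'; rewrite tens11 mul1mx.
- move=> v' a'; rewrite /mr /h adjmxM adjmx_tens adjmx1 Esa.
  by rewrite -mulmxA (mulmxA (E v' a' *t _)) tensmx_mul Eid mulmx1.
- move=> w' b'; rewrite /mr /k adjmxM adjmx_tens adjmx1 Fsa.
  by rewrite [in RHS]mulmxA -[in RHS](mulmxA (adjmx psi)) tensmx_mul Fid mulmx1.
- by rewrite /mr Hpsi.
- exact: t0.
Qed.

End QInst.

Section LocPart.
Local Open Scope classical_set_scope.

Section Loc.
Variables (R : realType) (I O : finType).

Lemma null_bigU (d : measure_display) (T : measurableType d)
   (P : probability T R) (J : finType) (G : J -> set T) :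
  (forall j, measurable (G j) /\ P (G j) = 0%E) ->
  measurable (\big[setU/set0]_j G j) /\ P (\big[setU/set0]_j G j) = 0%E.
Proof.
move=> HG; elim/big_rec: _ => [|j S _ [mS PS]].
  by split; [exact: measurable0 | exact: measure0].
have [mG PG] := HG j.
split; first exact: measurableU.
by rewrite measureU0 // setUC.
Qed.

Lemma sub_bigU (T : Type) (J : finType) (G : J -> set T) j :
  G j `<=` \big[setU/set0]_j G j.
Proof. by rewrite (bigD1 j) //=; exact: subsetUl. Qed.

Lemma loc_sym (p : density R I O) : loc_density p -> diag0 p ->
  forall v w a b, p v w a b = p w v b a.
Proof.
move=> [d [Om [P [f [g [Mf [Mg Hp]]]]]]] D.
pose G u (x : O * O) : set Om :=
  if x.1 != x.2 then [set om | f u om = x.1 /\ g u om = x.2] else set0.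
pose N u := \big[setU/set0]_x G u x.
have HN : forall u, measurable (N u) /\ P (N u) = 0%E.
  move=> u; rewrite /N; apply: null_bigU. move=> [c c']; rewrite /G /=.
  case: ifP => Hc; last by split; [exact: measurable0 | exact: measure0].
  split; first by apply: measurableI; [exact: Mf | exact: Mg].
  by rewrite -Hp D.
have le1 : forall v w a b, (p v w a b <= p w v b a)%R.
  move=> v w a b; rewrite -lee_fin !Hp.
  have [mNv PNv] := HN v; have [mNw PNw] := HN w.
  have mS1 : measurable [set om | f v om = a /\ g w om = b] by by apply: measurableI; [exact: Mf | exact: Mg].
  have mS2 : measurable [set om | f w om = b /\ g v om = a] by by apply: measurableI; [exact: Mf | exact: Mg].
  have mN : measurable (N v `|` N w) by exact: measurableU.
  have PN : P (N v `|` N w) = 0%E by rewrite measureU0.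
  rewrite -[X in (_ <= X)%E](measureU0 mS2 mN PN).
  apply: le_measure; rewrite ?inE //; first exact: measurableU.
  move=> om [Hf Hg].
  case: (eqVneq (f v om) (g v om)) => Ev; last first.
    right; left; apply: (@sub_bigU _ _ (G v) (f v om, g v om)).
    by rewrite /G /= Ev.
  case: (eqVneq (f w om) (g w om)) => Ew; last first.
    right; right; apply: (@sub_bigU _ _ (G w) (f w om, g w om)).
    by rewrite /G /= Ew.
  by left; split; [rewrite Ew | rewrite -Ev].
by move=> v w a b; apply/eqP; rewrite eq_le !le1.
Qed.

End Loc.

End LocPart.


Lemma class_sym (R : realType) (I O : finType) (t : corr_class) (p : density R I O) :
  in_class t p -> diag0 p -> forall v w a b, p v w a b = p w v b a.
Proof.
case: t => /= Hc D.
- exact: loc_sym.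
- exact: sym_of_bound (q_bound Hc) D.
- apply: qa_sym D => eps eps0.
  have [p' [Hq Hcl]] := Hc eps eps0.
  by exists p'; split; [exact: q_bound|].
- exact: sym_of_bound (qc_bound Hc) D.
- exact: sym_of_bound (vect_bound Hc) D.
Qed.

Theorem mainTheorem10 (R : realType) (I O : finType) (lam : rule I O)
  (Hsync : synchronous lam) (t : corr_class) (p : density R I O) :
  perfect_strategy t lam p <-> perfect_strategy t (sym_rule lam) p.
Proof.
split => -[Hd [Hc Hp]]; split => //; split => // v w a b.
- rewrite /sym_rule.
  have D : diag0 p by move=> u c c' Hcc; apply: Hp; rewrite Hsync (negbTE Hcc).
  have S := class_sym Hc D.
  case E1 : (lam v w a b) => /= E2; first by rewrite S Hp.
  by rewrite Hp.
- by move=> E; apply: Hp; rewrite /sym_rule E.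
Qed.
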